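(* Let $K\ge1$, $\beta\in(0,1)$, $V^{\mathrm c}>0$, and for each $k$ let $\alpha_k>0$ with $\sum_k\alpha_k=1$, $L_k>0$, $V_k^{\mathrm d}>0$, $R_k>0$. For $t_k>0$, $V_k^{\mathrm c}>0$ define \[ \widehat D_{k,1}=\frac{L_k}{t_kR_k}\cdot\frac{(t_kR_k+V_k^{\mathrm c})(t_kR_k+\beta V_k^{\mathrm d})}{V_k^{\mathrm d}V_k^{\mathrm c}(1+\beta)+t_kR_k(V_k^{\mathrm d}+V_k^{\mathrm c})},\qquad \widehat D_{k,2}=\frac{L_k}{t_kR_k}\cdot\frac{t_kR_k+\beta V_k^{\mathrm d}}{V_k^{\mathrm d}+t_kR_k}, \] and $\widehat D_k=\widehat D_{k,1}$ if $t_kR_k\ge\sqrt{\beta V_k^{\mathrm d}V_k^{\mathrm c}}$, $\widehat D_k=\widehat D_{k,2}$ if $t_kR_k<\sqrt{\beta V_k^{\mathrm d}V_k^{\mathrm c}}$. Consider the problem (Problem 4) \[ \min_{\{t_k,V_k^{\mathrm c}\}}\sum_{k=1}^K\alpha_k\widehat D_k\quad\text{s.t.}\quad \sum_{k=1}^K t_k\le1,\ t_k\ge0,\quad \sum_{k=1}^K V_k^{\mathrm c}\le V^{\mathrm c},\ V_k^{\mathrm c}\ge0. \] Then Problem 4 is a piecewise convex optimization problem: each $\widehat D_k$ is a continuous, piecewise-defined function of $(t_k,V_k^{\mathrm c})$ whose pieces $\widehat D_{k,1}$, $\widehat D_{k,2}$ are convex, and the objective $\sum_k\alpha_k\widehat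 D_k$ is convex in $(t_1,\dots,t_K,V_1^{\mathrm c},\dots,V_K^{\mathrm c})$ on the domain $t_k>0$, $V_k^{\mathrm c}>0$.
   Context: $\widehat D_k$ is the minimal end-to-end delay of device $k$ in the partial compression offloading model (local compression speed $V_k^{\mathrm d}$, edge compression speed $V_k^{\mathrm c}$, TDMA time fraction $t_k$, average channel rate $R_k$, $L_k$ raw bits, compression ratio $\beta$) after optimizing the fraction of data compressed locally. The paper asserts ''Problem 4 is a piecewise convex optimization problem''; the claim spells this out as convexity of the pieces and of the overall objective. *)

(* Defs.v *)
From Stdlib Require Import Reals Lra.
From Coquelicot Require Import Coquelicot.
Open Scope R_scope.

Definition Dhat1 (L Rk Vd beta t Vc : R) : R :=
  L / (t * Rk) *
  (((t * Rk + Vc) * (t * Rk + beta * Vd)) /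
   (Vd * Vc * (1 + beta) + t * Rk * (Vd + Vc))).

Definition Dhat2 (L Rk Vd beta t Vc : R) : R :=
  L / (t * Rk) * ((t * Rk + beta * Vd) / (Vd + t * Rk)).

Definition Dhat (L Rk Vd beta t Vc : R) : R :=
  if Rle_dec (sqrt (beta * Vd * Vc)) (t * Rk)
  then Dhat1 L Rk Vd beta t Vc
  else Dhat2 L Rk Vd beta t Vc.

(* Objective of Problem 4: sum_{k=0}^{K-1} alpha_k * Dhat_k (devices indexed 0..K-1). *)
Definition objective (K : nat) (alpha L Rk Vd : nat -> R) (beta : R)
  (t Vc : nat -> R) : R :=
  sum_f_R0 (fun k => alpha k * Dhat (L k) (Rk k) (Vd k) beta (t k) (Vc k)) (K - 1).

Definition convex_pos2 (f : R -> R -> R) : Prop :=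
  forall x1 y1 x2 y2 l : R,
    0 < x1 -> 0 < y1 -> 0 < x2 -> 0 < y2 -> 0 <= l <= 1 ->
    f (l * x1 + (1 - l) * x2) (l * y1 + (1 - l) * y2)
      <= l * f x1 y1 + (1 - l) * f x2 y2.

(* Joint convexity of a function of (t_0..t_{K-1}, Vc_0..Vc_{K-1}) on the
   domain t_k > 0, Vc_k > 0 (k < K). Only the first K coordinates matter. *)
Definition convex_pos_vec (K : nat) (F : (nat -> R) -> (nat -> R) -> R) : Prop :=
  forall (t1 v1 t2 v2 : nat -> R) (l : R),
    (forall k, (k < K)%nat -> 0 < t1 k /\ 0 < v1 k /\ 0 < t2 k /\ 0 < v2 k) ->
    0 <= l <= 1 ->
    F (fun k => l * t1 k + (1 - l) * t2 k) (fun k => l * v1 k + (1 - l) * v2 k)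
      <= l * F t1 v1 + (1 - l) * F t2 v2.

(* Main.v *)
Require Import Defs.
From Stdlib Require Import Reals Lra Psatz Lia.
From Coquelicot Require Import Coquelicot.
Open Scope R_scope.

Lemma qlin u1 u2 w1 w2 l : 0 < w1 -> 0 < w2 -> 0 <= l <= 1 ->
  (l*u1+(1-l)*u2)^2/(l*w1+(1-l)*w2) <= l*(u1^2/w1) + (1-l)*(u2^2/w2).
Proof.
  intros H1 H2 Hl.
  assert (HW : 0 < l*w1+(1-l)*w2) by nra.
  assert (E : l*(u1^2/w1) + (1-l)*(u2^2/w2) - (l*u1+(1-l)*u2)^2/(l*w1+(1-l)*w2)
     = l*(1-l)*(u1*w2-u2*w1)^2/(w1*w2*(l*w1+(1-l)*w2))) by (field; lra).
  assert (0 <= l*(1-l)*(u1*w2-u2*w1)^2/(w1*w2*(l*w1+(1-l)*w2))).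
  { apply Rdiv_le_0_compat. apply Rmult_le_pos. nra. apply pow2_ge_0.
    apply Rmult_lt_0_compat; [nra|lra]. }
  lra.
Qed.

Lemma inv_conv w1 w2 l : 0 < w1 -> 0 < w2 -> 0 <= l <= 1 ->
  / (l*w1+(1-l)*w2) <= l*(/w1) + (1-l)*(/w2).
Proof.
  intros H1 H2 Hl. pose proof (qlin 1 1 w1 w2 l H1 H2 Hl) as H.
  replace (l*1+(1-l)*1) with 1 in H by ring.
  unfold Rdiv in H. rewrite !pow1, !Rmult_1_l in H. exact H.
Qed.

Definition yf V b c := V*(1+b)*c/(V+c).
Definition F V b x c := (1-b)*V - x + b*V^2/x + (x+b*V)^2/(x + yf V b c).

Lemma D1_eq L Rk V b t c : 0 < t*Rk -> 0 < c -> 0 < V -> 0 < b ->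
  Dhat1 L Rk V b t c = L/((1+b)*V^2) * F V b (t*Rk) c.
Proof.
  intros Hx Hc HV Hb. unfold Dhat1, F, yf.
  replace (t*Rk) with (t*Rk) by reflexivity. set (x := t*Rk) in *.
  assert (0 < V*c*(1+b)) by (apply Rmult_lt_0_compat; nra).
  assert (0 < x*(V+c)) by (apply Rmult_lt_0_compat; lra).
  assert (0 < V*c*(1+b) + x*(V+c)) by lra.
  assert (0 < x*(V+c) + V*(1+b)*c) by lra.
  field. repeat split; lra.
Qed.

Lemma y_conc V b c1 c2 l : 0 < V -> 0 < b -> 0 < c1 -> 0 < c2 -> 0 <= l <= 1 ->
  l*yf V b c1 + (1-l)*yf V b c2 <= yf V b (l*c1+(1-l)*c2).
Proof.
  intros HV Hb H1 H2 Hl.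
  assert (E : forall c, 0 < c -> yf V b c = V*(1+b) - V^2*(1+b) * / (V+c)).
  { intros c Hc. unfold yf. field. lra. }
  rewrite !E; try nra.
  pose proof (inv_conv (V+c1) (V+c2) l ltac:(lra) ltac:(lra) Hl) as H.
  replace (l*(V+c1)+(1-l)*(V+c2)) with (V + (l*c1+(1-l)*c2)) in H by ring.
  assert (0 < V^2*(1+b)) by (apply Rmult_lt_0_compat; [apply pow_lt|]; lra).
  assert (V^2*(1+b) * / (V + (l * c1 + (1 - l) * c2)) <= V^2*(1+b) * (l * / (V + c1) + (1 - l) * / (V + c2))) by (apply Rmult_le_compat_l; lra).
  nra.
Qed.

Lemma yf_pos V b c : 0 < V -> 0 < b -> 0 < c -> 0 < yf V b c.
Proof. intros. unfold yf. apply Rdiv_lt_0_compat; [repeat apply Rmult_lt_0_compat|]; lra. Qed.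

Lemma F_conv V b x1 c1 x2 c2 l : 0 < V -> 0 < b -> 0 < x1 -> 0 < c1 -> 0 < x2 -> 0 < c2 -> 0 <= l <= 1 ->
  F V b (l*x1+(1-l)*x2) (l*c1+(1-l)*c2) <= l * F V b x1 c1 + (1-l) * F V b x2 c2.
Proof.
  intros HV Hb H1 H2 H3 H4 Hl. unfold F.
  pose proof (y_conc V b c1 c2 l HV Hb H2 H4 Hl) as Hy.
  pose proof (yf_pos V b c1 HV Hb H2). pose proof (yf_pos V b c2 HV Hb H4).
  set (y1 := yf V b c1) in *. set (y2 := yf V b c2) in *.
  set (yl := yf V b (l*c1+(1-l)*c2)) in *.
  pose proof (inv_conv x1 x2 l H1 H3 Hl) as Hi.
  assert (Hi' : b*V^2/(l*x1+(1-l)*x2) <= l*(b*V^2/x1) + (1-l)*(b*V^2/x2)).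
  { unfold Rdiv. assert (0 < b*V^2) by (apply Rmult_lt_0_compat; [|apply pow_lt]; lra).
    apply Rmult_le_compat_l with (r := b*V^2) in Hi; [|lra]. nra. }
  pose proof (qlin (x1+b*V) (x2+b*V) (x1+y1) (x2+y2) l ltac:(lra) ltac:(lra) Hl) as Hq.
  replace (l*(x1+b*V)+(1-l)*(x2+b*V)) with (l*x1+(1-l)*x2+b*V) in Hq by ring.
  replace (l*(x1+y1)+(1-l)*(x2+y2)) with (l*x1+(1-l)*x2+(l*y1+(1-l)*y2)) in Hq by ring.
  assert (Hm : (l*x1+(1-l)*x2+b*V)^2/(l*x1+(1-l)*x2+yl) <= (l*x1+(1-l)*x2+b*V)^2/(l*x1+(1-l)*x2+(l*y1+(1-l)*y2))).
  { unfold Rdiv. apply Rmult_le_compat_l. apply pow2_ge_0.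
    assert (0 < l*x1+(1-l)*x2) by nra.
    assert (0 <= l*y1+(1-l)*y2) by nra.
    apply Rinv_le_contravar; lra. }
  lra.
Qed.

Lemma D1_conv L Rk V b : 0 < L -> 0 < Rk -> 0 < V -> 0 < b ->
  convex_pos2 (Dhat1 L Rk V b).
Proof.
  intros HL HR HV Hb x1 y1 x2 y2 l H1 H2 H3 H4 Hl.
  assert (0 < x1*Rk) by (apply Rmult_lt_0_compat; lra).
  assert (0 < x2*Rk) by (apply Rmult_lt_0_compat; lra).
  assert (0 < l*x1+(1-l)*x2) by nra.
  assert (0 < l*y1+(1-l)*y2) by nra.
  assert (0 < (l*x1+(1-l)*x2)*Rk) by (apply Rmult_lt_0_compat; lra).
  rewrite !D1_eq; try lra.
  replace ((l*x1+(1-l)*x2)*Rk) with (l*(x1*Rk)+(1-l)*(x2*Rk)) by ring.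
  pose proof (F_conv V b (x1*Rk) y1 (x2*Rk) y2 l HV Hb ltac:(lra) H2 ltac:(lra) H4 Hl) as HF.
  assert (0 < L/((1+b)*V^2)).
  { apply Rdiv_lt_0_compat; [lra|]. apply Rmult_lt_0_compat; [lra|apply pow_lt; lra]. }
  apply Rmult_le_compat_l with (r := L/((1+b)*V^2)) in HF; lra.
Qed.

Lemma D2_eq L Rk V b t c : 0 < t*Rk -> 0 < V ->
  Dhat2 L Rk V b t c = L * (b * / (t*Rk) + (1-b) * / (t*Rk + V)).
Proof. intros Hx HV. unfold Dhat2. set (x := t*Rk) in *. field. lra. Qed.

Lemma D2_conv L Rk V b : 0 < L -> 0 < Rk -> 0 < V -> 0 < b < 1 ->
  convex_pos2 (Dhat2 L Rk V b).
Proof.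
  intros HL HR HV Hb x1 y1 x2 y2 l H1 H2 H3 H4 Hl.
  assert (0 < x1*Rk) by (apply Rmult_lt_0_compat; lra).
  assert (0 < x2*Rk) by (apply Rmult_lt_0_compat; lra).
  assert (0 < l*x1+(1-l)*x2) by nra.
  assert (0 < (l*x1+(1-l)*x2)*Rk) by (apply Rmult_lt_0_compat; lra).
  rewrite !D2_eq; try lra.
  replace ((l*x1+(1-l)*x2)*Rk) with (l*(x1*Rk)+(1-l)*(x2*Rk)) by ring.
  pose proof (inv_conv (x1*Rk) (x2*Rk) l ltac:(lra) ltac:(lra) Hl) as Ha.
  pose proof (inv_conv (x1*Rk+V) (x2*Rk+V) l ltac:(lra) ltac:(lra) Hl) as Hc.
  replace (l*(x1*Rk+V)+(1-l)*(x2*Rk+V)) with (l*(x1*Rk)+(1-l)*(x2*Rk)+V) in Hc by ring.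
  set (A := / (l*(x1*Rk)+(1-l)*(x2*Rk))) in *.
  set (C := / (l*(x1*Rk)+(1-l)*(x2*Rk)+V)) in *.
  set (a1 := / (x1*Rk)) in *. set (a2 := / (x2*Rk)) in *.
  set (c1 := / (x1*Rk+V)) in *. set (c2 := / (x2*Rk+V)) in *.
  assert (Hs : b*A + (1-b)*C <= b*(l*a1+(1-l)*a2) + (1-b)*(l*c1+(1-l)*c2)) by nra.
  apply Rmult_le_compat_l with (r := L) in Hs; [|lra]. nra.
Qed.

Lemma D1_D2 L Rk V b t c : 0 < t*Rk -> 0 < c -> 0 < V -> 0 < b ->
  Dhat1 L Rk V b t c - Dhat2 L Rk V b t c =
  L / (t*Rk) * (t*Rk + b*V) * ((t*Rk)^2 - b*V*c) /
    ((V*c*(1+b) + t*Rk*(V+c)) * (V + t*Rk)).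
Proof.
  intros Hx Hc HV Hb. unfold Dhat1, Dhat2. set (x := t*Rk) in *.
  assert (0 < V*c*(1+b)) by (apply Rmult_lt_0_compat; nra).
  assert (0 < x*(V+c)) by (apply Rmult_lt_0_compat; lra).
  field. repeat split; lra.
Qed.

Lemma Dhat_max L Rk V b t c : 0 < L -> 0 < t*Rk -> 0 < c -> 0 < V -> 0 < b ->
  Dhat L Rk V b t c = Rmax (Dhat1 L Rk V b t c) (Dhat2 L Rk V b t c).
Proof.
  intros HL Hx Hc HV Hb. pose proof (D1_D2 L Rk V b t c Hx Hc HV Hb) as E.
  set (x := t*Rk) in *.
  assert (0 < V*c*(1+b)) by (apply Rmult_lt_0_compat; nra).
  assert (0 < x*(V+c)) by (apply Rmult_lt_0_compat; lra).
  assert (Hd : 0 < (V*c*(1+b) + x*(V+c)) * (V + x)) by (apply Rmult_lt_0_compat; lra).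
  assert (Hp : 0 < L / x * (x + b*V)) by (apply Rmult_lt_0_compat; [apply Rdiv_lt_0_compat|]; nra).
  assert (0 <= b*V*c) by (apply Rmult_le_pos; [apply Rmult_le_pos|]; lra).
  pose proof (sqrt_sqrt (b*V*c) H1) as Hs. pose proof (sqrt_pos (b*V*c)).
  unfold Dhat. fold x. destruct (Rle_dec (sqrt (b*V*c)) x) as [h|h].
  - rewrite Rmax_left; [reflexivity|].
    assert (0 <= x^2 - b*V*c) by nra.
    assert (0 <= L / x * (x + b*V) * (x^2 - b*V*c) / ((V*c*(1+b) + x*(V+c)) * (V + x))).
    { apply Rdiv_le_0_compat; [|lra]. apply Rmult_le_pos; lra. }
    lra.
  - rewrite Rmax_right; [reflexivity|].
    assert (x^2 - b*V*c < 0) by nra.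
    assert (L / x * (x + b*V) * (x^2 - b*V*c) / ((V*c*(1+b) + x*(V+c)) * (V + x)) < 0).
    { unfold Rdiv at 2. apply Rmult_neg_pos; [|apply Rinv_0_lt_compat; lra]. 
      apply Rmult_pos_neg; lra. }
    lra.
Qed.

Lemma Dhat_conv L Rk V b : 0 < L -> 0 < Rk -> 0 < V -> 0 < b < 1 ->
  convex_pos2 (Dhat L Rk V b).
Proof.
  intros HL HR HV Hb x1 y1 x2 y2 l H1 H2 H3 H4 Hl.
  assert (0 < x1*Rk) by (apply Rmult_lt_0_compat; lra).
  assert (0 < x2*Rk) by (apply Rmult_lt_0_compat; lra).
  assert (0 < l*x1+(1-l)*x2) by nra.
  assert (0 < l*y1+(1-l)*y2) by nra.
  assert (0 < (l*x1+(1-l)*x2)*Rk) by (apply Rmult_lt_0_compat; lra).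
  rewrite !Dhat_max; try lra.
  pose proof (D1_conv L Rk V b HL HR HV ltac:(lra) x1 y1 x2 y2 l H1 H2 H3 H4 Hl).
  pose proof (D2_conv L Rk V b HL HR HV Hb x1 y1 x2 y2 l H1 H2 H3 H4 Hl).
  pose proof (Rmax_l (Dhat1 L Rk V b x1 y1) (Dhat2 L Rk V b x1 y1)).
  pose proof (Rmax_r (Dhat1 L Rk V b x1 y1) (Dhat2 L Rk V b x1 y1)).
  pose proof (Rmax_l (Dhat1 L Rk V b x2 y2) (Dhat2 L Rk V b x2 y2)).
  pose proof (Rmax_r (Dhat1 L Rk V b x2 y2) (Dhat2 L Rk V b x2 y2)).
  apply Rmax_lub; nra.
Qed.

Lemma obj_conv K beta alpha L Rk Vd : (1 <= K)%nat ->
  0 < beta < 1 ->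
  (forall k, (k < K)%nat -> 0 < alpha k /\ 0 < L k /\ 0 < Vd k /\ 0 < Rk k) ->
  convex_pos_vec K (objective K alpha L Rk Vd beta).
Proof.
  intros HK1 Hb HK t1 v1 t2 v2 l Hp Hl. unfold objective.
  assert (forall n, (n < K)%nat ->
    sum_f_R0 (fun k => alpha k * Dhat (L k) (Rk k) (Vd k) beta (l * t1 k + (1 - l) * t2 k) (l * v1 k + (1 - l) * v2 k)) n
    <= l * sum_f_R0 (fun k => alpha k * Dhat (L k) (Rk k) (Vd k) beta (t1 k) (v1 k)) n
       + (1 - l) * sum_f_R0 (fun k => alpha k * Dhat (L k) (Rk k) (Vd k) beta (t2 k) (v2 k)) n) as Hn.
  { assert (Ht : forall k, (k < K)%nat ->
      alpha k * Dhat (L k) (Rk k) (Vd k) beta (l * t1 k + (1 - l) * t2 k) (l * v1 k + (1 - l) * v2 k)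
      <= l * (alpha k * Dhat (L k) (Rk k) (Vd k) beta (t1 k) (v1 k))
         + (1 - l) * (alpha k * Dhat (L k) (Rk k) (Vd k) beta (t2 k) (v2 k))).
    { intros k Hk. destruct (HK k Hk) as (Ha & HL & HV & HR).
      destruct (Hp k Hk) as (A1 & A2 & A3 & A4).
      pose proof (Dhat_conv _ _ _ _ HL HR HV Hb _ _ _ _ l A1 A2 A3 A4 Hl) as H.
      apply Rmult_le_compat_l with (r := alpha k) in H; [|lra]. nra. }
    induction n; intros Hn; simpl.
    - apply Ht. exact Hn.
    - pose proof (IHn ltac:(lia)). pose proof (Ht (S n) Hn). lra. }
  apply Hn. lia.
Qed.

Section C.
Variable U : UniformSpace.
Lemma cmul (f g : U -> R) x : continuous f x -> continuous g x -> continuous (fun y => f y * g y) x.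
Proof. intros. exact (continuous_mult f g x H H0). Qed.
Lemma cadd (f g : U -> R) x : continuous f x -> continuous g x -> continuous (fun y => f y + g y) x.
Proof. intros. exact (continuous_plus f g x H H0). Qed.
Lemma cinv (f : U -> R) x : continuous f x -> f x <> 0 -> continuous (fun y => / f y) x.
Proof. intros. apply (continuous_comp f Rinv). exact H. apply continuous_Rinv. exact H0. Qed.
Lemma cdiv (f g : U -> R) x : continuous f x -> continuous g x -> g x <> 0 -> continuous (fun y => f y / g y) x.
Proof. intros. unfold Rdiv. apply cmul; auto. apply cinv; auto. Qed.
Lemma cmax (f g : U -> R) x : continuous f x -> continuous g x -> continuous (fun y => Rmax (f y) (g y)) x.
Proof.
  intros. apply continuous_ext with (f := fun y => (f y + g y + Rabs (f y + - g y)) * /2).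
  { intros y. unfold Rmax, Rabs. destruct (Rle_dec (f y) (g y)), (Rcase_abs (f y + - g y)); lra. }
  apply cmul; [|apply continuous_const]. apply cadd; [apply cadd; auto|].
  apply (continuous_comp (fun y => f y + - g y) Rabs). apply cadd; auto.
  exact (continuous_opp g x H0). apply continuous_Rabs.
Qed.
End C.

Ltac cont := lazymatch goal with
  | |- continuous (fun y => Rmax _ _) _ => apply cmax; cont
  | |- continuous (fun y => _ / _) _ => apply cdiv; [cont|cont|]
  | |- continuous (fun y => _ * _) _ => apply cmul; cont
  | |- continuous (fun y => _ + _) _ => apply cadd; cont
  | |- continuous (fun y => fst y) _ => apply continuous_fst
  | |- continuous (fun y => snd y) _ => apply continuous_snd
  | |- continuous (fun y => _) _ => apply continuous_const
  | _ => idtac end.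

Lemma Dhat_cont L Rk V b t c : 0 < L -> 0 < Rk -> 0 < V -> 0 < b -> 0 < t -> 0 < c ->
  continuous (fun p : R * R => Dhat L Rk V b (fst p) (snd p)) (t, c).
Proof.
  intros HL HR HV Hb Ht Hc.
  apply continuous_ext_loc with
    (g := fun p : R * R => Rmax (Dhat1 L Rk V b (fst p) (snd p)) (Dhat2 L Rk V b (fst p) (snd p))).
  - assert (He : 0 < Rmin t c) by (apply Rmin_pos; lra).
    exists (mkposreal _ He). intros [p1 p2] [B1 B2].
    change (Rabs (p1 - t) < Rmin t c) in B1. change (Rabs (p2 - c) < Rmin t c) in B2.
    pose proof (Rmin_l t c). pose proof (Rmin_r t c).
    apply Rabs_def2 in B1. apply Rabs_def2 in B2. simpl.
    symmetry. apply Dhat_max; try lra. apply Rmult_lt_0_compat; lra.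
  - unfold Dhat1, Dhat2. assert (0 < t*Rk) by (apply Rmult_lt_0_compat; lra).
    assert (0 < V*c*(1+b)) by (apply Rmult_lt_0_compat; [apply Rmult_lt_0_compat|]; lra).
    assert (0 < t*Rk*(V+c)) by (apply Rmult_lt_0_compat; lra).
    cont; simpl.
    all: try exact (continuous_fst t c).
    all: try exact (continuous_snd t c).
    all: apply Rgt_not_eq; lra.
Qed.

Theorem theorem3 (K : nat) (beta VcTot : R) (alpha L Rk Vd : nat -> R) :
  (1 <= K)%nat ->
  0 < beta < 1 ->
  0 < VcTot ->
  (forall k, (k < K)%nat -> 0 < alpha k /\ 0 < L k /\ 0 < Vd k /\ 0 < Rk k) ->
  sum_f_R0 alpha (K - 1) = 1 ->
  (forall k, (k < K)%nat ->
     (forall t Vc, 0 < t -> 0 < Vc ->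
        continuous (fun p : R * R => Dhat (L k) (Rk k) (Vd k) beta (fst p) (snd p))
          (t, Vc))
     /\ convex_pos2 (Dhat1 (L k) (Rk k) (Vd k) beta)
     /\ convex_pos2 (Dhat2 (L k) (Rk k) (Vd k) beta))
  /\ convex_pos_vec K (objective K alpha L Rk Vd beta).
Proof.
  intros HK1 Hb HV HK Hs. split.
  - intros k Hk. destruct (HK k Hk) as (Ha & HL & HVd & HR). split; [|split].
    + intros t Vc Ht HVc. apply Dhat_cont; lra.
    + apply D1_conv; lra.
    + apply D2_conv; lra.
  - apply obj_conv; assumption.
Qed.
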